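(* Let $G$ be a simple graph with at least one edge, with largest Laplacian eigenvalue $\mu_1$. Then the largest $\mathcal{H}$-eigenvalue $\lambda_1$ of $G$ satisfies $\lambda_1\le\max\{\mu_1,\,3\max_{e\in E(G)}\triangle(e)\}$.
   Context: For an oriented edge $e$ write $e^-$ for its tail and $e^+$ for its head. For distinct edges $e,e'$: $e\leftrightarrow e'$ means $e^+=e'^-$ or $e'^+=e^-$; $e\overset{\pm}{\sim}e'$ means $e^+=e'^+$ or $e^-=e'^-$; $e\vartriangle e'$ means $e,e'$ are two edges of a common triangle. $\triangle(e)$ is the number of triangles of $G$ containing $e$. The Helmholtzian matrix $\mathcal{H}(G)=(h_{ee'})$ is indexed by edges, with $h_{ee}=\triangle(e)+2$, and for $e\ne e'$: $h_{ee'}=-1$ if $e\leftrightarrow e'$ and not $e\vartriangle e'$; $h_{ee'}=1$ if $e\overset{\pm}{\sim}e'$ and not $e\vartriangle e'$; $h_{ee'}=0$ otherwise. The $\mathcal{H}$-eigenvalues are the eigenvalues of $\mathcal{H}(G)$ for an arbitrary orientation (independent of the orientation). The Laplacian matrix is $L(G)=D(G)-A(G)$. *)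

(* Defs.v *)
From HB Require Import structures.
From mathcomp Require Import all_boot all_order all_algebra.
Set Implicit Arguments. Unset Strict Implicit. Unset Printing Implicit Defensive.
Import Order.TTheory GRing.Theory Num.Theory.

(* A simple graph on the finite vertex type V is given by a symmetric,
   irreflexive adjacency relation [adj].  An orientation is given by a relation
   [o] such that, for every edge {u,v}, exactly one of [o u v], [o v u] holds
   (hypothesis in the theorem); the oriented edge is then (u,v) with [o u v]. *)
Definition oedge (V : finType) (adj o : rel V) :=
  {p : V * V | adj p.1 p.2 && o p.1 p.2}.

Local Open Scope ring_scope.
Section Defs.
Variables (V : finType) (adj o : rel V).
Local Notation E := (oedge adj o).

Definition etail (e : E) : V := (val e).1.
Definition ehead (e : E) : V := (val e).2.

Definition ntri (e : E) : nat :=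
  (#|[set w : V | adj (etail e) w && adj (ehead e) w]|)%N.

Definition ends (e : E) : {set V} := [set etail e; ehead e].

Definition etri (e e' : E) : bool :=
  [&& e != e', #|ends e :|: ends e'| == 3 &
      [forall x in ends e :|: ends e', forall y in ends e :|: ends e',
          (x != y) ==> adj x y]].

Definition econs (e e' : E) : bool :=
  (ehead e == etail e') || (ehead e' == etail e).

Definition esame (e e' : E) : bool :=
  (ehead e == ehead e') || (etail e == etail e').

Definition hentry (R : pzRingType) (e e' : E) : R :=
  if e == e' then (ntri e + 2)%N%:R
  else if econs e e' && ~~ etri e e' then -1
  else if esame e e' && ~~ etri e e' then 1
  else 0.

Definition Helmholtzian (R : pzRingType) : 'M[R]_#|{: E}| :=
  \matrix_(i, j) hentry R (enum_val i) (enum_val j).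

Definition vdeg (v : V) : nat := #|[set w : V | adj v w]|.

Definition Laplacian (R : pzRingType) : 'M[R]_#|{: V}| :=
  \matrix_(i, j) ((if i == j then (vdeg (enum_val i))%:R else 0)
                  - (if adj (enum_val i) (enum_val j) then 1 else 0)).

End Defs.

(* Main.v *)
Require Import Defs.
From HB Require Import structures.
From mathcomp Require Import all_boot all_order all_algebra.
From mathcomp.algebra_tactics Require Import ring.
Import Order.TTheory GRing.Theory Num.Theory.
Local Open Scope ring_scope.

Section Proof.
Variables (R : rcfType) (V : finType) (adj o : rel V).
Hypothesis adj_sym : symmetric adj.
Hypothesis adj_irr : irreflexive adj.
Hypothesis o_orient : forall u v : V, adj u v -> o u v = ~~ o v u.
Local Notation E := (oedge adj o).

Definition bb (v : V) (e : E) : R := (v == ehead e)%:R - (v == etail e)%:R.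
Definition DD (e e' : E) : R := \sum_v bb v e * bb v e'.

Lemma edge_adj (e : E) : adj (etail e) (ehead e).
Proof. by case/andP: (valP e). Qed.
Lemma edge_o (e : E) : o (etail e) (ehead e).
Proof. by case/andP: (valP e). Qed.
Lemma edge_neq (e : E) : etail e != ehead e.
Proof. by apply/eqP => h; have := edge_adj e; rewrite h adj_irr. Qed.
Lemma edge_eq (e e' : E) : etail e = etail e' -> ehead e = ehead e' -> e = e'.
Proof.
rewrite /etail /ehead => h1 h2; apply: val_inj.
by case: (val e) (val e') h1 h2 => [a c] [a' c'] /= -> ->.
Qed.
Lemma edge_norev (e e' : E) : etail e = ehead e' -> ehead e = etail e' -> False.
Proof.
move=> h1 h2; have := edge_o e; have := edge_o e'.
by rewrite h1 h2 (o_orient _ _ (edge_adj e')) => /negP.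
Qed.

Lemma sum_delta (F : V -> R) a : \sum_v (v == a)%:R * F v = F a.
Proof.
rewrite (bigD1 a) //= eqxx mul1r big1 ?addr0 // => v /negbTE ->; by rewrite mul0r.
Qed.
Lemma sum_delta' (F : V -> R) a : \sum_v (a == v)%:R * F v = F a.
Proof. by under eq_bigr => v _ do rewrite eq_sym; apply: sum_delta. Qed.

Lemma DDE e e' : DD e e' = bb (ehead e) e' - bb (etail e) e'.
Proof.
rewrite /DD /bb; under eq_bigr => v _ do rewrite mulrBl.
by rewrite sumrB !sum_delta.
Qed.
Lemma DDsym e e' : DD e e' = DD e' e.
Proof. by apply: eq_bigr => v _; rewrite mulrC. Qed.

Lemma etri_sym (e e' : E) : etri e e' = etri e' e.
Proof. by rewrite /etri eq_sym setUC. Qed.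
Lemma etri_refl (e : E) : etri e e = false.
Proof. by rewrite /etri eqxx. Qed.


Ltac simp_neq := repeat match goal with
 | H : is_true (?x != ?y) |- context [?x == ?y] => rewrite (negbTE H)
 | H : is_true (?x != ?y) |- context [?y == ?x] => rewrite [y == x]eq_sym (negbTE H)
 end; rewrite ?eqxx.

Lemma hentryE (e e' : E) : hentry R e e' =
  DD e e' + (e == e')%:R * (ntri e)%:R - (etri e e')%:R * DD e e'.
Proof.
have [<-|ne] := eqVneq e e'.
  rewrite /hentry eqxx etri_refl DDE /bb eqxx (negbTE (edge_neq e)).
  rewrite eq_sym (negbTE (edge_neq e)) natrD eqxx /=; ring.
rewrite /hentry (negbTE ne) mul0r addr0.
case: (etri e e') => /=; first by rewrite !andbF mul1r subrr.
rewrite !andbT mul0r subr0 DDE /bb /econs /esame.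
have H1 : etail e = etail e' -> ehead e = ehead e' -> False.
  by move=> h1 h2; move/eqP: ne; apply; apply: edge_eq.
have H2 := @edge_norev e e'.
move: H1 H2 (edge_neq e) (edge_neq e').
move: (etail e) (ehead e) (etail e') (ehead e') => a c a' c' H1 H2 n1 n2.
have [E1|E1] := eqVneq c a'; have [E2|E2] := eqVneq a c';
have [E3|E3] := eqVneq c c'; have [E4|E4] := eqVneq a a'; subst => //=;
simp_neq => /=; rewrite ?eqxx /=;
try (by exfalso; apply: H1); try (by exfalso; apply: H2);
try (by move: n1; rewrite eqxx); try (by move: n2; rewrite eqxx); ring.
Qed.


Definition tri (p q a c : V) : bool :=
  (((a == p) || (a == q)) && (adj p c && adj q c)) ||
  ((adj p a && adj q a) && ((c == p) || (c == q))).

Lemma tri_sym p q a c : tri p q a c = tri p q c a.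
Proof. by rewrite /tri orbC; congr (_ || _); apply: andbC. Qed.

Lemma set3 (S : {set V}) x y z : S =i [:: x; y; z] -> x != y -> y != z -> x != z ->
  (#|S| == 3%N) && [forall u in S, forall w in S, (u != w) ==> adj u w] =
  [&& adj x y, adj y z & adj x z].
Proof.
move=> HS xy yz xz.
have -> : #|S| = 3%N.
  rewrite (eq_card HS); apply/card_uniqP; rewrite /= !inE negb_or xy xz yz //.
rewrite eqxx /=; apply/idP/idP.
  move/forallP => H.
  have H' : forall u w, u \in S -> w \in S -> u != w -> adj u w.
    by move=> u w uS wS uw; move: (H u); rewrite uS /= => /forallP/(_ w); rewrite wS uw.
  by apply/and3P; split; apply: H'; rewrite ?HS ?inE ?eqxx ?orbT.
case/and3P=> h1 h2 h3; apply/forallP => u; apply/implyP => uS.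
apply/forallP => w; apply/implyP => wS; apply/implyP => uw.
move: uS wS uw; rewrite !HS !inE.
by do 2 (case/or3P => /eqP ->); rewrite ?eqxx // => _; rewrite // adj_sym.
Qed.

Lemma set4 (S : {set V}) x y z t : S =i [:: x; y; z; t] ->
  uniq [:: x; y; z; t] -> (#|S| == 3%N) = false.
Proof. by move=> HS u; rewrite (eq_card HS) (card_uniqP u). Qed.

Lemma etriE (e' e : E) : etri e' e = tri (etail e') (ehead e') (etail e) (ehead e).
Proof.
have [<-|ne] := eqVneq e' e; first by rewrite etri_refl /tri !adj_irr /= !andbF.
rewrite /etri ne /= /ends.
have H1 : etail e' = etail e -> ehead e' = ehead e -> False.
  by move=> h1 h2; move/eqP: ne; apply; apply: edge_eq.
have H2 := @edge_norev e' e.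
move: H1 H2 (edge_neq e) (edge_neq e') (edge_adj e) (edge_adj e').
move: (etail e) (ehead e) (etail e') (ehead e') => a c p q H1 H2 ac pq hac hpq.
rewrite /tri.
have [ap|ap] := eqVneq a p.
  subst a; have qc : q != c by apply/eqP => h; apply: H1.
  rewrite (@set3 _ p q c); last 4 first.
  - by move=> u; rewrite !inE; repeat case: eqP.
  - by []. - by []. - by [].
  by rewrite ?eqxx hpq hac ?adj_irr /= ?andbT ?andbF ?orbF ?orbT.
have [aq|aq] := eqVneq a q.
  subst a; have pc : p != c by apply/eqP => h; apply: H2.
  rewrite (@set3 _ p q c); last 4 first.
  - by move=> u; rewrite !inE; repeat case: eqP.
  - by []. - by []. - by [].
  by rewrite hpq adj_irr /= ?andbF ?orbF andbC.
have [cp|cp] := eqVneq c p.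
  subst c.
  rewrite (@set3 _ p q a); last 4 first.
  - by move=> u; rewrite !inE; repeat case: eqP.
  - by []. - by rewrite eq_sym. - by rewrite eq_sym.
  by rewrite hpq [adj p a]adj_sym hac adj_irr /= ?andbT ?andbF ?orbT ?orbF.

have [cq|cq] := eqVneq c q.
  subst c.
  rewrite (@set3 _ p q a); last 4 first.
  - by move=> u; rewrite !inE; repeat case: eqP.
  - by []. - by rewrite eq_sym. - by rewrite eq_sym.
  by rewrite hpq [adj q a]adj_sym hac adj_irr /= ?andbT ?andbF ?orbT ?orbF.

rewrite (@set4 _ p q a c).
- by rewrite /= ?andbF.
- by move=> u; rewrite !inE; repeat case: eqP.
by rewrite /= !inE !negb_or pq [p == a]eq_sym ap [p == c]eq_sym cp
  [q == a]eq_sym aq [q == c]eq_sym cq ac.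
Qed.


Lemma sumE (F : V -> V -> R) : \sum_(e : E) F (etail e) (ehead e) =
  \sum_a \sum_c (if adj a c && o a c then F a c else 0).
Proof.
rewrite pair_bigA /= -big_mkcond /=.
rewrite (reindex_omap (val : E -> V * V) insub); last first.
  by move=> p Pp; rewrite insubT.
by apply: eq_bigl => e; rewrite (valP e) valK eqxx.
Qed.

Lemma sym2 (F : V -> V -> R) : (forall a c, F a c = F c a) ->
  2 * \sum_(e : E) F (etail e) (ehead e) = \sum_a \sum_c (adj a c)%:R * F a c.
Proof.
move=> Fs; rewrite sumE.
have -> : \sum_a \sum_c (adj a c)%:R * F a c =
  \sum_a \sum_c (if adj a c && o a c then F a c else 0) +
  \sum_a \sum_c (if adj a c && ~~ o a c then F a c else 0).
  rewrite -big_split /=; apply: eq_bigr => a _; rewrite -big_split /=.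
  by apply: eq_bigr => c _; case: (adj a c); case: (o a c); rewrite /= ?mul1r ?mul0r ?addr0 ?add0r.
rewrite [X in _ = _ + X]exchange_big /=.
have -> : \sum_j \sum_i (if adj i j && ~~ o i j then F i j else 0) =
  \sum_a \sum_c (if adj a c && o a c then F a c else 0).
  apply: eq_bigr => a _; apply: eq_bigr => c _.
  rewrite [adj c a]adj_sym Fs; case h: (adj a c) => //=.
  by rewrite (o_orient c a) ?negbK // adj_sym.
ring.
Qed.

Lemma twice_inj (x y : R) : 2 * x = 2 * y -> x = y.
Proof.
move/(congr1 ( *%R 2^-1)); rewrite !mulrA mulVf ?mul1r //.
by rewrite pnatr_eq0.
Qed.

Lemma degE u : (vdeg adj u)%:R = \sum_w (adj u w)%:R :> R.
Proof.
rewrite /vdeg -[X in X%:R]sum1_card natr_sum big_mkcond /=.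
by apply: eq_bigr => w _; rewrite inE; case: adj.
Qed.

Definition Lf (u v : V) : R :=
  (if u == v then (vdeg adj u)%:R else 0) - (if adj u v then 1 else 0).

Lemma C0 u v : \sum_(e : E) bb u e * bb v e = Lf u v.
Proof.
apply: twice_inj.
rewrite (sym2 (fun a c => ((u == c)%:R - (u == a)%:R) * ((v == c)%:R - (v == a)%:R))); last first.
  by move=> a c; ring.
have inner : forall a, \sum_c (adj a c)%:R * (((u == c)%:R - (u == a)%:R) * ((v == c)%:R - (v == a)%:R)) =
  (adj a u)%:R * (v == u)%:R - (adj a u)%:R * (v == a)%:R - (u == a)%:R * (adj a v)%:R
  + (u == a)%:R * (v == a)%:R * (vdeg adj a)%:R :> R.
  move=> a.
  transitivity (\sum_c ((u == c)%:R * ((adj a c)%:R * (v == c)%:R)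
     - (u == c)%:R * ((adj a c)%:R * (v == a)%:R)
     - (v == c)%:R * ((u == a)%:R * (adj a c)%:R)
     + (u == a)%:R * (v == a)%:R * (adj a c)%:R : R)).
    by apply: eq_bigr => c _; ring.
  rewrite big_split /= !sumrB !sum_delta' -mulr_sumr degE.
  by rewrite [(v == u)]eq_sym.
under eq_bigr => a _ do rewrite inner.
rewrite big_split /= !sumrB.
have d1 : \sum_i (adj i u)%:R = (vdeg adj u)%:R :> R.
  by rewrite degE; apply: eq_bigr => i _; rewrite adj_sym.
rewrite -big_distrl /= d1.
under [X in _ - X - _ + _ = _]eq_bigr => a _ do rewrite mulrC.
rewrite !sum_delta'.
under eq_bigr => a _ do rewrite -mulrA.
rewrite sum_delta' /Lf [adj v u]adj_sym [v == u]eq_sym.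
by case: (u == v); case: (adj u v); rewrite /=; ring.
Qed.


Ltac brute :=
  repeat match goal with
  | |- context [adj ?x ?x] => rewrite (adj_irr x)
  | |- context [?x == ?x] => rewrite eqxx
  | H : is_true (?x != ?y) |- context [?x == ?y] => rewrite (negbTE H)
  | H : is_true (?x != ?y) |- context [?y == ?x] => rewrite [y == x]eq_sym (negbTE H)
  end;
  repeat match goal with |- context [adj ?x ?y] => case: (adj x y) end;
  repeat match goal with |- context [?x == ?y] => case: (x == y) end;
  rewrite /= ?subr0 ?sub0r ?opprK ?normrN ?normr1 ?normr0 ?subrr; ring.

Ltac splitall a c p q :=
  try (have [?|?] := eqVneq a c; try subst);
  try (have [?|?] := eqVneq a p; try subst);
  try (have [?|?] := eqVneq a q; try subst);
  try (have [?|?] := eqVneq c p; try subst);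
  try (have [?|?] := eqVneq c q; try subst).

Definition beta (p q x : V) : R := (x == q)%:R - (x == p)%:R.
Definition Kf (p q v a c : V) : R :=
  beta p q a * (adj p c && adj q c)%:R * ((v == a)%:R - (v == c)%:R).

Lemma ident1 (p q a c v : V) : p != q ->
  (tri p q a c)%:R * ((beta p q c - beta p q a) * ((v == c)%:R - (v == a)%:R)) =
  Kf p q v a c + Kf p q v c a.
Proof.
move=> pq; rewrite /Kf /beta /tri.
splitall a c p q; brute.
Qed.


Lemma tri_adj p q a c : tri p q a c -> adj a c.
Proof.
rewrite /tri => /orP[/andP[/orP[/eqP->|/eqP->] /andP[h1 h2]] | /andP[/andP[h1 h2] /orP[/eqP->|/eqP->]]] //.
  by rewrite adj_sym. by rewrite adj_sym.
Qed.

Lemma adj_tri p q a c : (adj a c)%:R * (tri p q a c)%:R = (tri p q a c)%:R :> R.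
Proof. by case h: (tri p q a c); [rewrite (@tri_adj _ _ _ _ h) mul1r | rewrite mulr0]. Qed.

Lemma ntriE (e : E) : (ntri e)%:R = \sum_w (adj (etail e) w && adj (ehead e) w)%:R :> R.
Proof.
rewrite /ntri -[X in X%:R]sum1_card natr_sum big_mkcond /=.
by apply: eq_bigr => w _; rewrite inE; case: (_ && _).
Qed.

Lemma sum_ind (a : V) : \sum_v (v == a)%:R = 1 :> R.
Proof. by rewrite (bigD1 a) //= eqxx big1 ?addr0 // => v /negbTE ->. Qed.

Definition F1 p q v a c : R := (tri p q a c)%:R *
     ((beta p q c - beta p q a) * ((v == c)%:R - (v == a)%:R)).

Lemma T1 (e' : E) v : \sum_(e : E) (etri e' e)%:R * DD e' e * bb v e = (ntri e')%:R * bb v e'.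
Proof.
apply: twice_inj.
have pq := edge_neq e'.
move: (ntriE e'); rewrite -/(beta _ _ _).
have -> : \sum_(e : E) (etri e' e)%:R * DD e' e * bb v e =
  \sum_(e : E) F1 (etail e') (ehead e') v (etail e) (ehead e).
  by apply: eq_bigr => e _; rewrite etriE DDsym DDE -mulrA.
have -> : bb v e' = beta (etail e') (ehead e') v by [].
move: (etail e') (ehead e') pq => p q pq ->.
rewrite (sym2 (F1 p q v)); last by move=> a c; rewrite /F1 tri_sym; ring.
under eq_bigr => a _ do under eq_bigr => c _ do rewrite /F1 mulrA adj_tri ident1 //.
under eq_bigr => a _ do rewrite big_split /=.
rewrite big_split /= [X in _ + X = _]exchange_big /=.
have inner : forall a, \sum_c Kf p q v a c =
    beta p q a * (v == a)%:R * \sum_w (adj p w && adj q w)%:R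
    - beta p q a * (adj p v && adj q v)%:R.
  move=> a.
  transitivity (\sum_c (beta p q a * (v == a)%:R * (adj p c && adj q c)%:R
      - beta p q a * ((v == c)%:R * (adj p c && adj q c)%:R))).
    by apply: eq_bigr => c _; rewrite /Kf; ring.
  by rewrite sumrB -!mulr_sumr sum_delta'.
have hX : \sum_a \sum_c Kf p q v a c = \sum_w (adj p w && adj q w)%:R * beta p q v.
  under eq_bigr => a _ do rewrite inner.
  rewrite sumrB -!big_distrl /=.
  have sb : \sum_a beta p q a = 0 by rewrite /beta sumrB !sum_ind subrr.
  have sd : \sum_a beta p q a * (v == a)%:R = beta p q v.
    by under eq_bigr do rewrite mulrC; rewrite sum_delta'.
  by rewrite sd sb mul0r subr0 mulrC.
rewrite hX.
rewrite -big_distrl /=; ring.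
Qed.


Definition F2 p q a c : R := (tri p q a c)%:R * `|beta p q c - beta p q a|.
Definition Mf (p q a c : V) : R := ((a == p) || (a == q))%:R * (adj p c && adj q c)%:R.

Lemma ident2 (p q a c : V) : p != q -> F2 p q a c = Mf p q a c + Mf p q c a.
Proof.
move=> pq; rewrite /F2 /Mf /beta /tri.
splitall a c p q;
  (repeat match goal with
  | |- context [adj ?x ?x] => rewrite (adj_irr x)
  | |- context [?x == ?x] => rewrite eqxx
  | H : is_true (?x != ?y) |- context [?x == ?y] => rewrite (negbTE H)
  | H : is_true (?x != ?y) |- context [?y == ?x] => rewrite [y == x]eq_sym (negbTE H)
  end;
  repeat match goal with |- context [adj ?x ?y] => case: (adj x y) end;
  rewrite /= ?mulr1n ?mulr0n ?subr0 ?sub0r ?opprK ?normrN ?normr1 ?normr0 ?subrr; ring).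
Qed.

Lemma T2 (e' : E) : \sum_(e : E) (etri e' e)%:R * `|DD e' e| = 2 * (ntri e')%:R.
Proof.
apply: twice_inj.
have pq := edge_neq e'.
rewrite ntriE.
have -> : \sum_(e : E) (etri e' e)%:R * `|DD e' e| =
  \sum_(e : E) F2 (etail e') (ehead e') (etail e) (ehead e).
  by apply: eq_bigr => e _; rewrite etriE DDsym DDE.
move: (etail e') (ehead e') pq => p q pq.
rewrite (sym2 (F2 p q)); last by move=> a c; rewrite /F2 tri_sym distrC.
under eq_bigr => a _ do under eq_bigr => c _ do rewrite /F2 mulrA adj_tri -/(F2 p q a c) ident2 //.
under eq_bigr => a _ do rewrite big_split /=.
rewrite big_split /= [X in _ + X = _]exchange_big /=.
have hX : \sum_a \sum_c Mf p q a c = 2 * \sum_w (adj p w && adj q w)%:R.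
  rewrite /Mf; under eq_bigr => a _ do rewrite -mulr_sumr.
  rewrite -big_distrl /=; congr (_ * _).
  transitivity (\sum_a ((a == p)%:R + (a == q)%:R) : R).
    apply: eq_bigr => a _; have [->|ap] := eqVneq a p.
      by rewrite ?eqxx (negbTE pq) /= ?mulr0n ?addr0 ?mulr1n.
    by rewrite /= add0r.
  by rewrite big_split /= !sum_ind.
rewrite hX; ring.
Qed.


Lemma sum_deltaE (F : E -> R) (e : E) : \sum_(e2 : E) (e == e2)%:R * F e2 = F e.
Proof.
rewrite (bigD1 e) //= eqxx mul1r big1 ?addr0 // => e2 ne2.
by rewrite eq_sym (negbTE ne2) mul0r.
Qed.

Lemma C1 (e : E) v : \sum_(e2 : E) hentry R e e2 * bb v e2 = \sum_u bb u e * Lf u v.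
Proof.
under eq_bigr => e2 _ do rewrite hentryE !mulrBl mulrDl.
rewrite sumrB big_split /=.
have -> : \sum_(e2 : E) (e == e2)%:R * (ntri e)%:R * bb v e2 = (ntri e)%:R * bb v e.
  under eq_bigr => e2 _ do rewrite -mulrA.
  by rewrite sum_deltaE.
have -> : \sum_(e2 : E) (etri e e2)%:R * DD e e2 * bb v e2 = (ntri e)%:R * bb v e by apply: T1.
rewrite addrK.
under eq_bigr => e2 _ do rewrite /DD big_distrl /=.
rewrite exchange_big /=; apply: eq_bigr => u _.
rewrite -C0 mulr_sumr; apply: eq_bigr => e2 _; ring.
Qed.

Lemma key (lam : R) : eigenvalue (Helmholtzian adj o R) lam ->
  eigenvalue (Laplacian adj R) lam \/ exists e0 : E, lam <= (3 * ntri e0)%:R.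
Proof.
case/eigenvalueP => x xH x0.
pose f (e : E) := x 0 (enum_rank e).
have fH : forall e0, \sum_e f e * hentry R e e0 = lam * f e0.
  move=> e0; move/rowP/(_ (enum_rank e0)): xH; rewrite !mxE => <-.
  rewrite (reindex (@enum_rank _)) /=; last by apply: onW_bij; apply: enum_rank_bij.
  by apply: eq_bigr => e _; rewrite mxE !enum_rankK.
have fnz : exists e1, f e1 != 0.
  case: (boolP [exists e, f e != 0]) => [/existsP//|/existsPn H].
  move/negP: x0 => x0; exfalso; apply: x0; apply/eqP/rowP => i.
  have := H (enum_val i); rewrite /f enum_valK negbK => /eqP ->.
  by rewrite mxE.
pose w v := \sum_e f e * bb v e.
case: (boolP [forall v, w v == 0]) => [/forallP hw | /forallPn [v wv]].
  right.
  have [e1 fe1] := fnz.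
  case: (@arg_maxP _ _ E e1 xpredT (fun e => `|f e|) isT) => e0 _ He0.
  exists e0.
  have f0 : 0 < `|f e0|.
    by apply: lt_le_trans (He0 e1 isT); rewrite normr_gt0.
  have s0 : \sum_e f e * DD e e0 = 0.
    under eq_bigr => e _ do rewrite /DD mulr_sumr.
    rewrite exchange_big /=; apply: big1 => u _.
    under eq_bigr => e _ do rewrite mulrA.
    by rewrite -big_distrl /=; move/eqP: (hw u); rewrite /w => ->; rewrite mul0r.
  have eq1 : lam * f e0 = \sum_e f e * ((e == e0)%:R * (ntri e)%:R - (etri e e0)%:R * DD e e0).
    rewrite -fH; rewrite (_ : \sum_e f e * hentry R e e0 = \sum_e f e * DD e e0 +
      \sum_e f e * ((e == e0)%:R * (ntri e)%:R - (etri e e0)%:R * DD e e0)).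
      by rewrite s0 add0r.
    by rewrite -big_split; apply: eq_bigr => e _; rewrite hentryE /=; ring.
  have bnd : \sum_e `|(e == e0)%:R * (ntri e)%:R - (etri e e0)%:R * DD e e0| <= (3 * ntri e0)%:R.
    apply: le_trans (_ : \sum_e ((e0 == e)%:R * (ntri e)%:R + (etri e0 e)%:R * `|DD e0 e|) <= _).
      apply: ler_sum => e _; rewrite etri_sym DDsym [e == e0]eq_sym.
      apply: le_trans (ler_normB _ _) _.
      by rewrite !normrM !normr_nat.
    rewrite big_split /= sum_deltaE T2 natrM.
    by rewrite le_eqVlt; apply/orP; left; apply/eqP; ring.
  have main : `|lam| * `|f e0| <= (3 * ntri e0)%:R * `|f e0|.
    rewrite -normrM eq1; apply: le_trans (ler_norm_sum _ _ _) _.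
    apply: le_trans (_ : \sum_e `|f e0| *
        `|(e == e0)%:R * (ntri e)%:R - (etri e e0)%:R * DD e e0| <= _).
      apply: ler_sum => e _; rewrite normrM.
      by apply: ler_wpM2r => //; apply: He0.
    by rewrite -mulr_sumr mulrC; apply: ler_wpM2r.
  rewrite ler_pM2r // in main.
  exact: le_trans (ler_norm _) main.
left.
have Lm : forall i j, Laplacian adj R i j = Lf (enum_val i) (enum_val j).
  by move=> i j; rewrite mxE /Lf (inj_eq enum_val_inj).
apply/eigenvalueP; exists (\row_i w (enum_val i)); last first.
  apply/negP => /eqP/rowP/(_ (enum_rank v)); rewrite !mxE enum_rankK => /eqP.
  by apply/negP.
apply/rowP => j; rewrite !mxE.
under eq_bigr => i _ do rewrite Lm mxE.
rewrite (reindex (@enum_rank _)) /=; last by apply: onW_bij; apply: enum_rank_bij.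
under eq_bigr => u _ do rewrite enum_rankK.
move: (enum_val j) => v'.
rewrite /w.
under eq_bigr => u _ do rewrite big_distrl /=.
rewrite exchange_big /=.
under eq_bigr => e _ do (under eq_bigr => u _ do rewrite -mulrA; rewrite -mulr_sumr -C1 mulr_sumr).
rewrite exchange_big /= mulr_sumr; apply: eq_bigr => e2 _.
under eq_bigr => e _ do rewrite mulrA.
by rewrite -big_distrl /= fH mulrA.
Qed.

End Proof.

Theorem corollary5p3 (R : rcfType) (V : finType) (adj o : rel V)
  (adj_sym : symmetric adj) (adj_irr : irreflexive adj)
  (o_orient : forall u v : V, adj u v -> o u v = ~~ o v u)
  (has_edge : exists u v : V, adj u v)
  (lam1 mu1 : R)
  (lam1_eig : eigenvalue (Helmholtzian adj o R) lam1)
  (lam1_max : forall x : R, eigenvalue (Helmholtzian adj o R) x -> x <= lam1)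
  (mu1_eig : eigenvalue (Laplacian adj R) mu1)
  (mu1_max : forall x : R, eigenvalue (Laplacian adj R) x -> x <= mu1) :
  lam1 <= Num.max mu1 ((3 * \max_(e : oedge adj o) ntri e)%N)%:R.
Proof.
case: (@key R V adj o adj_sym adj_irr o_orient lam1 lam1_eig) => [/mu1_max h | [e0 h]].
  by rewrite le_max h.
rewrite le_max; apply/orP; right; apply: le_trans h _.
by rewrite ler_nat leq_mul2l /= (leq_bigmax (F := fun e : oedge adj o => ntri e) e0).
Qed.
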